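(* Let $R\subseteq S$, $\sigma$ be as in the context. Let $\mathbf{a}=(a_1,\ldots,a_\ell)\in(S^* )^\ell$ and $\beta_{i,j}\in S$ for $1\le i\le\ell$, $1\le j\le n_i$, satisfying: (i) $a_i-a_j^\beta\in S^*$ for all $\beta\in S^*$ and $1\le i<j\le\ell$; (ii) for each $i$, $\beta_{i,1},\ldots,\beta_{i,n_i}$ are $R$-linearly independent. Then there exist units $\gamma_{i,j}\in S^*$ ($1\le i\le\ell$, $1\le j\le n_i$) with $\gamma_{1,1}=\beta_{1,1}$, such that the skew polynomials $$G_{i,j}=\big(x-a_i^{\gamma_{i,j}}\big)\cdots\big(x-a_i^{\gamma_{i,1}}\big)\big(x-a_{i-1}^{\gamma_{i-1,n_{i-1}}}\big)\cdots\big(x-a_{i-1}^{\gamma_{i-1,1}}\big)\cdots\big(x-a_1^{\gamma_{1,n_1}}\big)\cdots\big(x-a_1^{\gamma_{1,1}}\big)\in S[x;\sigma]$$ have degree $\deg(G_{i,j})=\sum_{u=1}^{i-1}n_u+j$ and satisfy, for all $1\le u\le\ell$, $1\le v\le n_u$: $G_{i,j}(a_u^{\beta_{u,v}})=0$ if $u\le i-1$, or if $u=i$ and $v\le j$; and $G_{i,j}(a_u^{\beta_{u,v}})\in S^*$ if $u\ge i+1$, or if $u=i$ and $v\ge j+1$. This holds for all $1\le i\le\ell$ and $1\le j\le n_i$.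
   Context: $R$ is a finite commutative chain ring with maximal ideal $\mathfrak{m}$, $q=|R/\mathfrak{m}|$; $S=R[x]/(h)$ with $h$ monic of degree $m$ irreducible modulo $\mathfrak{m}$, local with maximal ideal $\mathfrak{M}=\mathfrak{m}S$ and unit group $S^*=S\setminus\mathfrak{M}$. $\sigma$ is a ring automorphism of $S$ generating the Galois group of $R\subseteq S$, with fixed ring $R$, reducing modulo $\mathfrak{M}$ to $y\mapsto y^q$ on $\mathbb{F}_{q^m}$. $S[x;\sigma]$ is the skew polynomial ring with $xa=\sigma(a)x$. For $a\in S$ and $\beta\in S^*$, $a^\beta=\sigma(\beta)a\beta^{-1}$. For $F\in S[x;\sigma]$ and $b\in S$, the remainder evaluation $F(b)$ is the unique $c\in S$ such that $F=Q\cdot(x-b)+c$ for some $Q\in S[x;\sigma]$. *)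

(* Defs.v *)
From HB Require Import structures.
From mathcomp Require Import all_boot all_order all_algebra.
Set Implicit Arguments. Unset Strict Implicit. Unset Printing Implicit Defensive.
Import GRing.Theory.
Local Open Scope ring_scope.

Definition is_ideal (R : finComUnitRingType) (I : {set R}) : Prop :=
  [/\ 0 \in I, (forall x y, x \in I -> y \in I -> x + y \in I)
    & (forall r x, x \in I -> r * x \in I)].

Definition chain_ring (R : finComUnitRingType) : Prop :=
  forall I J : {set R}, is_ideal I -> is_ideal J -> I \subset J \/ J \subset I.

(* k with pi : R -> k is the residue field R/m (pi surjective, kernel = the
   maximal ideal m = nonunits of R); q = #|k|.  S is presented as R[θ] with
   θ a root of h and 1, θ, ..., θ^(m-1) an R-basis (i.e. S ≅ R[x]/(h)). *)
Definition galois_setting (R S : finComUnitRingType) (iota : {rmorphism R -> S})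
  (k : finFieldType) (pi : {rmorphism R -> k}) (h : {poly R}) (theta : S)
  (sigma : {rmorphism S -> S}) : Prop :=
  [/\ chain_ring R /\ injective iota,
      (forall z : k, exists r, pi r = z) /\ (forall r, pi r = 0 <-> ~~ (r \is a GRing.unit)),
      h \is monic /\ irreducible_poly (map_poly pi h),
      root (map_poly iota h) theta /\
      bijective (fun c : {ffun 'I_(size h).-1 -> R} =>
                   \sum_(i < (size h).-1) iota (c i) * theta ^+ i)
    & [/\ bijective sigma,
          (forall s, sigma s = s <-> exists r, s = iota r),
          (forall tau : {rmorphism S -> S}, bijective tau ->
             (forall r, tau (iota r) = iota r) ->
             exists t : nat, forall s, tau s = iter t sigma s)
        & (forall y, ~~ (sigma y - y ^+ #|k| \is a GRing.unit))]].

(* A skew polynomial sum_i f_i x^i is represented by its coefficient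
   polynomial in {poly S} (coefficients on the left); addition is that of
   {poly S}, multiplication uses x a = σ(a) x. *)
Definition skew_mul (S : comUnitRingType) (sigma : S -> S) (p q : {poly S})
  : {poly S} :=
  \poly_(kk < (size p + size q).-1)
     \sum_(i < kk.+1) p`_i * iter i sigma (q`_(kk - i)).

(* Remainder evaluation: F(b) = c iff F = Q (x - b) + c for some Q. *)
Definition skew_rem (S : comUnitRingType) (sigma : S -> S) (F : {poly S})
  (b c : S) : Prop :=
  exists Q : {poly S}, F = skew_mul sigma Q ('X - b%:P) + c%:P.

Definition sconj (S : comUnitRingType) (sigma : S -> S) (a beta : S) : S :=
  sigma beta * a * beta^-1.

(* Left-multiplied product: for roots [c_1; ...; c_N] gives
   (x - c_N) ... (x - c_1). *)
Definition skew_prod (S : comUnitRingType) (sigma : S -> S) (cs : seq S)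
  : {poly S} :=
  foldl (fun P c => skew_mul sigma ('X - c%:P) P) 1 cs.

(* G_{i,j} with 0-based indices i, j (paper's G_{i+1,j+1}). *)
Definition Gpoly (S : comUnitRingType) (sigma : S -> S) (a : nat -> S)
  (n : nat -> nat) (gamma : nat -> nat -> S) (i j : nat) : {poly S} :=
  skew_prod sigma
    ([seq sconj sigma (a u) (gamma u v) | u <- iota 0 i, v <- iota 0 (n u)]
     ++ [seq sconj sigma (a i) (gamma i v) | v <- iota 0 j.+1]).

(* Main.v *)
Require Import Defs.
From HB Require Import structures.
From mathcomp Require Import all_boot all_order all_algebra all_field.
From mathcomp Require Import ring zify.
Set Implicit Arguments. Unset Strict Implicit. Unset Printing Implicit Defensive.
Import GRing.Theory.
Local Open Scope ring_scope.

Section Skew.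
Variables (S : comUnitRingType) (sigma : {rmorphism S -> S}).

Lemma iterD n x y : iter n sigma (x + y) = iter n sigma x + iter n sigma y.
Proof. by elim: n => //= n ->; rewrite rmorphD. Qed.
Lemma iterN n x : iter n sigma (- x) = - iter n sigma x.
Proof. by elim: n => //= n ->; rewrite rmorphN. Qed.
Lemma iter1 n : iter n sigma 1 = 1.
Proof. by elim: n => //= n ->; rewrite rmorph1. Qed.
Lemma iter0 n : iter n sigma 0 = 0.
Proof. by elim: n => //= n ->; rewrite rmorph0. Qed.

Lemma skew_mulXC c (P : {poly S}) :
  skew_mul sigma ('X - c%:P) P = 'X * map_poly sigma P - c *: P.
Proof.
apply/polyP => i; rewrite coef_poly size_XsubC add2n /=.
rewrite coefB coefXM coefZ coef_map /=.
case: ltnP => Hi.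
  case: i Hi => [|i] Hi.
    by rewrite big_ord1 /= coefB coefX coefC /= subn0 sub0r mulNr add0r.
  rewrite big_ord_recl big_ord_recl big1 => [|t _].
    rewrite /= !coefB !coefX !coefC /= subn0 subSS subn0; ring.
  by rewrite /= coefB coefX coefC /= subrr mul0r.
rewrite !nth_default ?rmorph0 ?mulr0 ?if_same ?subrr //; [exact: ltnW | by case: i Hi].
Qed.

Definition tw (b : S) (Q : {poly S}) := \poly_(i < size Q) (Q`_i * iter i sigma b).

Lemma coef_tw b Q i : (tw b Q)`_i = Q`_i * iter i sigma b.
Proof.
rewrite coef_poly; case: ltnP => // H; by rewrite nth_default // mul0r.
Qed.

Lemma skew_mulCX b (Q : {poly S}) :
  skew_mul sigma Q ('X - b%:P) = Q * 'X - tw b Q.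
Proof.
apply/polyP => i; rewrite coef_poly size_XsubC addn2 /=.
rewrite coefB coefMX coef_tw.
case: ltnP => Hi.
  case: i Hi => [|i] Hi.
    rewrite big_ord1 /= coefB coefX coefC /=; ring.
  rewrite big_ord_recr big_ord_recr /= big1 => [|t _].
    rewrite subnn subSn // subnn !coefB !coefX !coefC /= subr0 sub0r iterN iter1 rmorphN; ring.
  have Ht : (t < i)%N := ltn_ord t.
  have H1 : (i.+1 - t != 1)%N by lia.
  have H0 : (i.+1 - t != 0)%N by lia.
  by rewrite coefB coefX coefC (negPf H1) (negPf H0) subrr iter0 mulr0.
rewrite !nth_default ?mul0r ?if_same ?subr0 //; [exact: ltnW | by case: i Hi].
Qed.

Definition rv (cs : seq S) (b : S) := foldl (fun r c => sigma r * b - c * r) 1 cs.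

Lemma tw0 b : tw b 0 = 0.
Proof. by apply/polyP => i; rewrite coef_tw coef0 mul0r. Qed.

Lemma rem_prod cs b : skew_rem sigma (skew_prod sigma cs) b (rv cs b).
Proof.
elim/last_ind: cs => [|cs c IH].
  exists 0; rewrite skew_mulCX tw0 mul0r subr0 add0r /rv /=.
  by rewrite polyC1.
case: IH => Q HQ.
rewrite /skew_prod foldl_rcons -/(skew_prod sigma cs) /rv foldl_rcons -/(rv cs b).
exists ('X * map_poly sigma Q - c *: Q + (sigma (rv cs b))%:P).
rewrite skew_mulXC HQ !skew_mulCX.
apply/polyP => i.
rewrite !(coefD, coefB, coefN, coefXM, coefMX, coefZ, coef_map, coefC, coef_tw) /=.
case: i => [|[|i]] /=; rewrite ?(rmorphD, rmorphB, rmorphN, rmorphM, rmorph0) /=; ring.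
Qed.

Lemma skew_prod_monic cs :
  skew_prod sigma cs \is monic /\ size (skew_prod sigma cs) = (size cs).+1.
Proof.
elim/last_ind: cs => [|cs c [IHm IHs]].
  by rewrite /skew_prod /= monic1 size_poly1.
rewrite /skew_prod foldl_rcons -/(skew_prod sigma cs) skew_mulXC size_rcons.
set P := skew_prod sigma cs.
have l1 : lead_coef P = 1 by apply/monicP.
have s1 : sigma (lead_coef P) != 0 by rewrite l1 rmorph1 oner_neq0.
have sM : size (map_poly sigma P) = size P by rewrite size_map_poly_id0.
have lM : lead_coef (map_poly sigma P) = 1.
    by rewrite lead_coef_map_eq // l1; exact: rmorph1.
have M0 : map_poly sigma P != 0 by rewrite -size_poly_gt0 sM IHs.
have sXM : size ('X * map_poly sigma P) = (size P).+1 by rewrite mulrC size_mulX // sM.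
have sc : (size (- (c *: P)) < size ('X * map_poly sigma P)%R)%N.
  by rewrite size_opp sXM ltnS size_scale_leq.
split; last by rewrite size_addl // sXM IHs.
by apply/monicP; rewrite lead_coefDl // mulrC lead_coefMX lM.
Qed.

Definition Lv (x : S) (cs : seq S) (y : S) :=
  foldl (fun y c => x * sigma y - c * y) y cs.

Lemma Lv_rcons x cs c y : Lv x (rcons cs c) y = x * sigma (Lv x cs y) - c * Lv x cs y.
Proof. by rewrite /Lv foldl_rcons. Qed.

Lemma LvB x cs y z : Lv x cs (y - z) = Lv x cs y - Lv x cs z.
Proof.
elim/last_ind: cs => [|cs c IH] //.
by rewrite !Lv_rcons IH rmorphB; ring.
Qed.

Lemma LvZ x cs r y : sigma r = r -> Lv x cs (r * y) = r * Lv x cs y.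
Proof.
move=> Hr; elim/last_ind: cs => [|cs c IH] //.
by rewrite !Lv_rcons IH rmorphM Hr; ring.
Qed.

Lemma rv_Lv x cs beta : beta \is a GRing.unit ->
  rv cs (sconj sigma x beta) * beta = Lv x cs beta.
Proof.
move=> Hb; elim/last_ind: cs => [|cs c IH]; first by rewrite /rv /= mul1r.
rewrite Lv_rcons -IH /rv foldl_rcons -/(rv cs _) /sconj.
set r := rv cs _.
have E : sigma r * (sigma beta * x * beta^-1) * beta = sigma r * sigma beta * x * (beta^-1 * beta) by ring.
by rewrite mulrBl E mulVr // mulr1 rmorphM; ring.
Qed.

End Skew.
Section Local.
Variables (R S : finComUnitRingType) (iota : {rmorphism R -> S}) (k : finFieldType)
  (pi : {rmorphism R -> k}).
Hypothesis pi_surj : forall z : k, exists r, pi r = z.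
Hypothesis pi_ker : forall r, pi r = 0 <-> ~~ (r \is a GRing.unit).
Hypothesis chainR : chain_ring R.

Lemma pi_unit r : pi r != 0 -> r \is a GRing.unit.
Proof. by move=> H; apply/negPn/negP => /pi_ker /eqP; rewrite (negPf H). Qed.

Lemma exists_unif : exists p0 : R, pi p0 = 0 /\ forall x, pi x = 0 -> exists r, x = p0 * r.
Proof.
pose I : {set R} := [set x | pi x == 0].
pose pr (x : R) : {set R} := [set x * r | r : R].
have idl x : is_ideal (pr x).
  split.
  - by apply/imsetP; exists 0; rewrite ?mulr0.
  - move=> y z /imsetP[r1 _ ->] /imsetP[r2 _ ->]; apply/imsetP; exists (r1 + r2) => //.
    by rewrite mulrDr.
  - move=> r y /imsetP[r1 _ ->]; apply/imsetP; exists (r * r1) => //; ring.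
have I0 : (0 : R) \in I by rewrite inE rmorph0.
case: (@arg_maxnP R 0 (fun x => x \in I) (fun x => #|pr x|) I0) => p0 Hp0 Hmax.
exists p0; split; first by move: Hp0; rewrite inE => /eqP.
move=> x Hx.
have xI : x \in I by rewrite inE Hx.
have : x \in pr p0.
  case: (chainR (idl x) (idl p0)) => H.
  - by apply: (subsetP H); apply/imsetP; exists 1; rewrite ?mulr1.
  - have Hc : (#|pr x| <= #|pr p0|)%N := Hmax x xI.
    have E : pr p0 = pr x by apply/eqP; rewrite eqEcard H Hc.
    by rewrite E; apply/imsetP; exists 1; rewrite ?mulr1.
by case/imsetP => r _ ->; exists r.
Qed.

Lemma nilp (x : R) : pi x = 0 -> exists t, x ^+ t = 0.
Proof.
move=> Hx.
pose f (i : 'I_#|R|.+1) := x ^+ i.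
have : ~~ injectiveb f.
  apply/negP => /injectiveP Hinj; have := leq_card f Hinj.
  by rewrite card_ord ltnn.
case/injectivePn => i [j] neq Eij.
have key : forall a b : nat, (a < b)%N -> x ^+ a = x ^+ b -> x ^+ a = 0.
  move=> a b ab E.
  have E2 : x ^+ a * (1 - x ^+ (b - a)) = 0.
    have ab' : (a <= b)%N by apply: ltnW.
    rewrite mulrBr mulr1 -exprD (subnKC ab') -E; exact: subrr.
  have U : (1 - x ^+ (b - a)) \is a GRing.unit.
    apply: pi_unit; rewrite rmorphB rmorph1 rmorphXn Hx expr0n.
    have -> : (b - a == 0)%N = false by lia.
    by rewrite subr0 oner_neq0.
  by rewrite -[x ^+ a]mulr1 -(mulrV U) mulrA E2 mul0r.
case: (ltngtP i j) => H.
- by exists i; apply: (key i j).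
- by exists j; apply: (key j i) => //.
- by move: neq; rewrite (val_inj H) eqxx.
Qed.

Lemma unif_data : exists p0 t0,
  [/\ pi p0 = 0, (forall x, pi x = 0 -> exists r, x = p0 * r),
      p0 ^+ t0 = 0 & p0 ^+ t0.-1 != 0].
Proof.
have [p0 [H0 Hg]] := exists_unif.
have Hex : exists t, p0 ^+ t == 0 by have [t Ht] := nilp H0; exists t; apply/eqP.
case: (ex_minnP Hex) => t0 /eqP Ht0 Hmin.
exists p0, t0; split => //.
apply/negP => /eqP E.
have := Hmin t0.-1; rewrite E eqxx => /(_ isT).
case: t0 Ht0 {Hmin E} => [|t] /=; last by rewrite ltnn.
by rewrite expr0 => /eqP; rewrite oner_eq0.
Qed.

Section Loc2.
Variables (p0 : R) (t0 : nat).
Hypotheses (Hp0 : pi p0 = 0) (Hgen : forall x, pi x = 0 -> exists r, x = p0 * r)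
  (Ht0 : p0 ^+ t0 = 0) (Ht0' : p0 ^+ t0.-1 != 0).

Definition inM (y : S) := exists w, y = iota p0 * w.

Lemma inM0 : inM 0. Proof. by exists 0; rewrite mulr0. Qed.
Lemma inMD x y : inM x -> inM y -> inM (x + y).
Proof. by move=> [w1 ->] [w2 ->]; exists (w1 + w2); rewrite mulrDr. Qed.
Lemma inMN x : inM x -> inM (- x).
Proof. by move=> [w1 ->]; exists (- w1); rewrite mulrN. Qed.
Lemma inMM z x : inM x -> inM (z * x).
Proof. by move=> [w1 ->]; exists (z * w1); rewrite mulrCA. Qed.

Lemma inM_nil y : inM y -> y ^+ t0 = 0.
Proof. by move=> [w ->]; rewrite exprMn -rmorphXn Ht0 rmorph0 mul0r. Qed.

Lemma inM_nonunit y : inM y -> ~~ (y \is a GRing.unit).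
Proof.
move=> Hy; apply/negP => /(unitrX t0); by rewrite (inM_nil Hy) unitr0.
Qed.

Lemma unit_add u e : u \is a GRing.unit -> inM e -> (u + e) \is a GRing.unit.
Proof.
move=> Hu He.
set z := - (u^-1 * e).
have Hz : z ^+ t0 = 0 by apply: inM_nil; apply: inMN; apply: inMM.
have U : (1 - z) \is a GRing.unit.
  apply/unitrPr; exists (\sum_(i < t0) 1 ^+ (t0.-1 - i) * z ^+ i).
  by rewrite -subrXX expr1n Hz subr0.
have -> : u + e = u * (1 - z) by rewrite /z opprK mulrDr mulr1 mulVKr.
by rewrite unitrM Hu U.
Qed.

Lemma KerEval (D : {poly R}) (x : S) : map_poly pi D = 0 -> inM ((map_poly iota D).[x]).
Proof.
move=> HD; rewrite horner_coef.
apply: (big_ind inM); [exact: inM0 | exact: inMD |].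
move=> i _; rewrite coef_map /=.
have : pi D`_i = 0 by rewrite -coef_map HD coef0.
case/Hgen => r ->; exists (iota r * x ^+ i).
by rewrite rmorphM mulrA.
Qed.

Lemma pi_surjb z : exists r, pi r == z.
Proof. by have [r Hr] := pi_surj z; exists r; apply/eqP. Qed.
Definition lft (z : k) : R := xchoose (pi_surjb z).
Lemma lftE z : pi (lft z) = z.
Proof. exact: (eqP (xchooseP (pi_surjb z))). Qed.

Definition liftp (p : {poly k}) : {poly R} := \poly_(i < size p) lft p`_i.
Lemma liftpE p : map_poly pi (liftp p) = p.
Proof.
apply/polyP => i; rewrite coef_map coef_poly /=.
by case: ltnP => H; [rewrite lftE | rewrite rmorph0 nth_default].
Qed.

Section Coord.
Variables (h : {poly R}) (theta : S).
Hypotheses (hirr : irreducible_poly (map_poly pi h)) (hmon : h \is monic)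
  (hroot : root (map_poly iota h) theta).

Lemma coord_unit m (c : 'I_m -> R) (i0 : 'I_m) : pi (c i0) != 0 -> (m < size h)%N ->
  (\sum_(i < m) iota (c i) * theta ^+ i) \is a GRing.unit.
Proof.
move=> Hc Hm.
pose s : {poly R} := \sum_(i < m) c i *: 'X^i.
have Hs : (map_poly iota s).[theta] = \sum_(i < m) iota (c i) * theta ^+ i.
  rewrite raddf_sum horner_sum; apply: eq_bigr => i _.
  by rewrite /= map_polyZ map_polyXn hornerZ hornerXn.
pose sb := map_poly pi s.
have sbE : sb = \sum_(i < m) pi (c i) *: 'X^i.
  by rewrite /sb raddf_sum; apply: eq_bigr => i _; rewrite /= map_polyZ map_polyXn.
have sb_size : (size sb <= m)%N.
  rewrite sbE; apply: (big_ind (fun p : {poly k} => (size p <= m)%N)).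
  - by rewrite size_poly0.
  - move=> p q Hp Hq; apply: leq_trans (size_polyD _ _) _; by rewrite geq_max Hp Hq.
  - move=> i _; apply: leq_trans (size_scale_leq _ _) _; by rewrite size_polyXn.
have sb0 : sb != 0.
  apply/negP => /eqP /(congr1 (fun p : {poly k} => p`_i0)).
  rewrite sbE coef_sum coef0 (bigD1 i0) //= big1 => [|j Hj].
    by rewrite coefZ coefXn eqxx mulr1 addr0; apply/eqP.
  rewrite coefZ coefXn.
  have -> : (nat_of_ord i0 == nat_of_ord j) = false.
    by apply/negP => /eqP /val_inj E; rewrite E eqxx in Hj.
  by rewrite mulr0.
have hb_size : size (map_poly pi h) = size h.
  by rewrite size_map_poly_id0 // (monicP hmon) rmorph1 oner_neq0.
have cop : coprimep sb (map_poly pi h).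
  rewrite /coprimep; have := dvdp_gcdr sb (map_poly pi h).
  case/(irredp_XsubCP hirr) => Hg; first by rewrite (eqp_size Hg) size_poly1.
  have := dvdp_gcdl sb (map_poly pi h); rewrite (eqp_dvdl _ Hg) => /(dvdp_leq sb0).
  rewrite hb_size => H; exfalso; move: (leq_trans H sb_size); by rewrite leqNgt Hm.
case/Bezout_coprimepP: cop => [[u v]] /= Huv.
have : size (u * sb + v * map_poly pi h) == 1%N by rewrite size_poly_eq1.
case/size_poly1P => w w0 Ew.
pose E := liftp u * s + liftp v * h - (lft w)%:P.
have HE : map_poly pi E = 0.
  rewrite /E !rmorphB !rmorphD !rmorphM /= !liftpE map_polyC /= lftE -/sb Ew.
  exact: subrr.
have := KerEval theta HE.
rewrite /E !rmorphB !rmorphD !rmorphM /= map_polyC /= !hornerE Hs.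
move: hroot; rewrite /root => /eqP ->; rewrite mulr0 addr0 => HM.
have Uw : iota (lft w) \is a GRing.unit by apply: rmorph_unit; apply: pi_unit; rewrite lftE.
have := unit_add Uw HM; rewrite addrC subrK unitrM => /andP [_ ->] //.
Qed.

Hypothesis hbij : bijective (fun c : {ffun 'I_(size h).-1 -> R} =>
                   \sum_(i < (size h).-1) iota (c i) * theta ^+ i).

Lemma nonunit_inM (y : S) : ~~ (y \is a GRing.unit) -> inM y.
Proof.
move=> Hy; case: hbij => g fK gK.
have Ey := gK y; set c := g y in Ey.
case: (boolP [exists i, pi (c i) != 0]).
  case/existsP => i0 Hi0; exfalso.
  have Hm : ((size h).-1 < size h)%N.
    by rewrite prednK // size_poly_gt0 monic_neq0.
  have := coord_unit Hi0 Hm; rewrite Ey; by rewrite (negPf Hy).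
rewrite negb_exists => /forallP Hall.
rewrite -Ey; apply: (big_ind inM); [exact: inM0 | exact: inMD |].
move=> i _; have := Hall i; rewrite negbK => /eqP /Hgen [r ->].
by exists (iota r * theta ^+ i); rewrite rmorphM mulrA.
Qed.

Lemma nonunitD (x y : S) : ~~ (x \is a GRing.unit) -> ~~ (y \is a GRing.unit) ->
  ~~ (x + y \is a GRing.unit).
Proof.
by move=> /nonunit_inM Hx /nonunit_inM Hy; apply: inM_nonunit; apply: inMD.
Qed.

Lemma indep_unit (bs : nat -> S) (N : nat) (c : nat -> R) (w : nat) :
  (forall c : nat -> R, \sum_(j < N) iota (c j) * bs j = 0 -> forall j, (j < N)%N -> c j = 0) ->
  (w < N)%N -> c w \is a GRing.unit ->
  (\sum_(j < N) iota (c j) * bs j) \is a GRing.unit.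
Proof.
move=> Hind Hw Hc; apply/negPn/negP => /nonunit_inM [W EW].
have H0 : \sum_(j < N) iota (p0 ^+ t0.-1 * c j) * bs j = 0.
  transitivity (iota (p0 ^+ t0.-1) * \sum_(j < N) iota (c j) * bs j).
    by rewrite mulr_sumr; apply: eq_bigr => j _; rewrite rmorphM mulrA.
  rewrite EW mulrA -rmorphM -exprSr.
  case: t0 Ht0 Ht0' => [|t] /= H1 H2; first by rewrite H1 eqxx in H2.
  by rewrite H1 rmorph0 mul0r.
have := Hind (fun j => p0 ^+ t0.-1 * c j) H0 w Hw => /= E.
move: Ht0'; rewrite -[p0 ^+ t0.-1]mulr1 -(mulrV Hc) mulrA E mul0r eqxx //.
Qed.

Section FF.
Variable sigma : {rmorphism S -> S}.
Hypotheses (sfix : forall r, sigma (iota r) = iota r)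
  (sfrob : forall y, ~~ (sigma y - y ^+ #|k| \is a GRing.unit)).

Lemma FF t : (forall r, (t - iota r) \is a GRing.unit) -> (sigma t - t) \is a GRing.unit.
Proof.
move=> Ht; apply/negPn/negP => Hn.
have H1 : inM (t ^+ #|k| - t).
  apply: nonunit_inM.
  have -> : t ^+ #|k| - t = (sigma t - t) + - (sigma t - t ^+ #|k|) by ring.
  apply: nonunitD => //; by rewrite unitrN sfrob.
pose D : {poly R} := \prod_(z : k) ('X - (lft z)%:P) - ('X^#|k| - 'X).
have HD : map_poly pi D = 0.
  rewrite /D rmorphB rmorph_prod /=.
  under eq_bigr do rewrite map_polyXsubC lftE.
  by rewrite rmorphB /= map_polyXn map_polyX finField_genPoly subrr.
have := KerEval t HD.
rewrite /D rmorphB rmorph_prod /= hornerD hornerN horner_prod.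
under eq_bigr do rewrite map_polyXsubC hornerXsubC.
rewrite rmorphB /= map_polyXn map_polyX hornerD hornerN hornerXn hornerX => HM.
have UP : (\prod_(z : k) (t - iota (lft z))) \is a GRing.unit.
  by apply: (big_ind (fun x => x \is a GRing.unit)) => // [|x y Hx Hy]; rewrite ?unitr1 ?unitrM ?Hx ?Hy.
have := unit_add UP (inMN HM); rewrite opprB addrC subrK => HU.
by move: (inM_nonunit H1); rewrite HU.
Qed.
End FF.
End Coord.
End Loc2.
End Local.
Section Main.
Variables (R S : finComUnitRingType) (io : {rmorphism R -> S}) (sigma : {rmorphism S -> S})
  (l : nat) (a : nat -> S) (n : nat -> nat) (beta : nat -> nat -> S).
Hypotheses (Hsfix : forall r, sigma (io r) = io r)
  (Hunit_a : forall i, (i < l)%N -> a i \is a GRing.unit)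
  (Hsep : forall i j, (i < j < l)%N -> forall b : S, b \is a GRing.unit ->
     a i - sconj sigma (a j) b \is a GRing.unit)
  (Hind : forall i, (i < l)%N -> forall c : nat -> R,
     \sum_(j < n i) io (c j) * beta i j = 0 -> forall j, (j < n i)%N -> c j = 0)
  (Hiu : forall (bs : nat -> S) (N : nat) (c : nat -> R) (w : nat),
    (forall c : nat -> R, \sum_(j < N) io (c j) * bs j = 0 -> forall j, (j < N)%N -> c j = 0) ->
    (w < N)%N -> c w \is a GRing.unit ->
    (\sum_(j < N) io (c j) * bs j) \is a GRing.unit)
  (HFF : forall t, (forall r, (t - io r) \is a GRing.unit) -> (sigma t - t) \is a GRing.unit).

Fixpoint cls (x : S) (bs : nat -> S) (prev : seq S) (j : nat) : seq S :=
  if j is j'.+1 then let ps := cls x bs prev j' in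
    rcons ps (sconj sigma x (Lv sigma x (prev ++ ps) (bs j'))) else [::].
Fixpoint allp (i : nat) : seq S :=
  if i is i'.+1 then let p := allp i' in p ++ cls (a i') (beta i') p (n i') else [::].
Definition PL i j := allp i ++ cls (a i) (beta i) (allp i) j.
Definition gam i j := Lv sigma (a i) (PL i j) (beta i j).

Lemma PL_S i j : PL i j.+1 = rcons (PL i j) (sconj sigma (a i) (gam i j)).
Proof. by rewrite /PL /= rcons_cat. Qed.
Lemma PL_next i : PL i.+1 0 = PL i (n i).
Proof. by rewrite /PL /= cats0. Qed.

Lemma cls_map x bs prev j : cls x bs prev j =
  [seq sconj sigma x (Lv sigma x (prev ++ cls x bs prev v) (bs v)) | v <- iota 0 j].
Proof.
elim: j => // j IH.
rewrite -[j.+1 in RHS]addn1 iotaD map_cat -IH /= cats1.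
done.
Qed.

Lemma allp_map i : allp i = [seq sconj sigma (a u) (gam u v) | u <- iota 0 i, v <- iota 0 (n u)].
Proof.
elim: i => // i IH.
rewrite -[i.+1 in RHS]addn1 iotaD allpairs_cat -IH /= cats0 cls_map.
done.
Qed.

Lemma Gpoly_PL i j : Gpoly sigma a n gam i j = skew_prod sigma (PL i j.+1).
Proof. by rewrite /Gpoly /PL -allp_map [cls _ _ _ j.+1]cls_map. Qed.

Lemma sum_delta N (bs : nat -> S) j : (j < N)%N ->
  \sum_(v < N) io ((v == j :> nat)%:R) * bs v = bs j.
Proof.
move=> Hj; rewrite (bigD1 (Ordinal Hj)) //= big1 => [|v Hv].
  by rewrite eqxx rmorph1 mul1r addr0.
have -> : (nat_of_ord v == j) = false.
  by apply/negP => /eqP E; apply: (negP Hv); apply/eqP/val_inj.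
by rewrite rmorph0 mul0r.
Qed.

Lemma beta_unit u v : (u < l)%N -> (v < n u)%N -> beta u v \is a GRing.unit.
Proof.
move=> Hu Hv; rewrite -(sum_delta (beta u) Hv).
apply: (@Hiu (beta u) (n u) (fun w => (w == v)%:R) v (Hind Hu) Hv).
by rewrite eqxx unitr1.
Qed.

Definition Inv (P : seq S) i j :=
 [/\ forall u v, (u < l)%N -> (v < n u)%N -> ((u < i)%N \/ (u = i /\ (v < j)%N)) ->
        Lv sigma (a u) P (beta u v) = 0,
     forall u y, (i < u < l)%N -> y \is a GRing.unit -> Lv sigma (a u) P y \is a GRing.unit
   & forall c : nat -> R, (exists w, (j <= w < n i)%N /\ c w \is a GRing.unit) ->
        Lv sigma (a i) P (\sum_(v < n i) io (c v) * beta i v) \is a GRing.unit].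

Lemma Inv0 : (0 < l)%N -> Inv [::] 0 0.
Proof.
move=> Hl; split.
- by move=> u v _ Hv [//|[-> ]]; rewrite ltn0.
- by move=> u y _ Hy.
- by move=> c [w [/andP[_ Hw] Hc]]; apply: (Hiu (Hind Hl) Hw).
Qed.

Lemma Inv_next P i : (i.+1 < l)%N -> Inv P i (n i) -> Inv P i.+1 0.
Proof.
move=> Hl [HZ HU1 HU2]; split.
- move=> u v Hu Hv [|[_]]; last by rewrite ltn0.
  rewrite ltnS leq_eqVlt => /orP [/eqP Eu|Hlt].
    by apply: HZ => //; right; split => //; rewrite -Eu.
  by apply: HZ => //; left.
- by move=> u y /andP[Hu1 Hu2] Hy; apply: HU1 => //; rewrite Hu2 andbT; apply: ltnW.
- move=> c [w [/andP[_ Hw] Hc]]; apply: HU1; first by rewrite ltnSn Hl.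
  exact: (Hiu (Hind Hl) Hw).
Qed.

Lemma conj_unit x y g z : x \is a GRing.unit -> g \is a GRing.unit -> z \is a GRing.unit ->
  x - sconj sigma y (z * g^-1) \is a GRing.unit ->
  y * sigma z - sconj sigma x g * z \is a GRing.unit.
Proof.
move=> Hx Hg Hz H.
have Hgi : g^-1 \is a GRing.unit by rewrite unitrV.
have Hsg : sigma g \is a GRing.unit by apply: rmorph_unit.
move: H; rewrite /sconj rmorphM (rmorphV _ Hg) invrM // invrK => H.
have E0 : forall gi zi sgi : S, y * sigma z - sigma g * x * gi * z =
  - (sigma g * gi * z) * (x - sigma z * sgi * y * (g * zi))
   - (sigma g * sgi) * (gi * g) * (z * zi) * (y * sigma z) + y * sigma z.
  by move=> gi zi sgi; ring.
rewrite (E0 g^-1 z^-1 (sigma g)^-1) mulrV // mulVr // mulrV // !mul1r subrK.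
by rewrite unitrM unitrN !unitrM Hsg Hgi Hz H.
Qed.

Lemma Inv_step P i j : (i < l)%N -> (j < n i)%N -> Inv P i j ->
  Inv (rcons P (sconj sigma (a i) (Lv sigma (a i) P (beta i j)))) i j.+1.
Proof.
move=> Hi Hj [HZ HU1 HU2].
set g := Lv sigma (a i) P (beta i j).
have Hg : g \is a GRing.unit.
  rewrite /g -(sum_delta (beta i) Hj); apply: (HU2 (fun v => (v == j)%:R)).
  by exists j; rewrite leqnn Hj eqxx unitr1.
have Hsg : sigma g \is a GRing.unit by apply: rmorph_unit.
split.
- move=> u v Hu Hv Hc; rewrite Lv_rcons.
  case: Hc => [Hlt|[Eu Hv']].
    by rewrite HZ //; [rewrite rmorph0 mulr0 mulr0 subr0 | left].
  move: Hv'; rewrite ltnS leq_eqVlt => /orP [/eqP Ev|Hlt].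
    rewrite Eu Ev -/g /sconj -mulrA mulVr // mulr1; ring.
  by rewrite HZ //; [rewrite rmorph0 mulr0 mulr0 subr0 | right].
- move=> u y /andP [Hu1 Hu2] Hy; rewrite Lv_rcons.
  have Hz := HU1 u y (introT andP (conj Hu1 Hu2)) Hy.
  apply: conj_unit => //; first exact: Hunit_a.
  apply: Hsep; first by rewrite Hu1 Hu2.
  by rewrite unitrM Hz unitrV.
- move=> c [w [/andP [Hw1 Hw2] Hc]]; rewrite Lv_rcons.
  set Y := \sum_(v < n i) io (c v) * beta i v.
  have Hz : Lv sigma (a i) P Y \is a GRing.unit.
    by apply: HU2; exists w; rewrite Hw2 andbT Hc ltnW.
  set z := Lv sigma (a i) P Y in Hz *.
  pose t := z * g^-1.
  have Ht : sigma t - t \is a GRing.unit.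
    apply: HFF => r.
    pose c' := fun v => c v - r * (v == j)%:R.
    have EY : \sum_(v < n i) io (c' v) * beta i v = Y - io r * beta i j.
      rewrite /c' -(sum_delta (beta i) Hj) mulr_sumr -sumrB; apply: eq_bigr => v _.
      by rewrite rmorphB rmorphM mulrBl mulrA.
    have Hwj : (w == j) = false.
      by apply/negP => /eqP E; move: Hw1; rewrite E ltnn.
    have Hw' : c' w \is a GRing.unit by rewrite /c' Hwj mulr0 subr0.
    have := HU2 c' (ex_intro _ w (conj (introT andP (conj (ltnW Hw1) Hw2)) Hw')).
    rewrite EY LvB LvZ // -/g -/z => Hu.
    have -> : t - io r = (z - io r * g) * g^-1 by rewrite /t mulrBl -mulrA mulrV // mulr1.
    by rewrite unitrM Hu unitrV.
  move: Ht; rewrite /t rmorphM (rmorphV _ Hg) => Ht.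
  have E0 : forall gi sgi : S, a i * sigma z - sigma g * a i * gi * z =
     a i * sigma g * (sigma z * sgi - z * gi) + a i * sigma z * (1 - sigma g * sgi).
    by move=> gi sgi; ring.
  rewrite /sconj (E0 g^-1 (sigma g)^-1) mulrV // subrr mulr0 addr0.
  by rewrite !unitrM Hunit_a // Hsg Ht.
Qed.

Lemma Inv_j i : (i < l)%N -> Inv (PL i 0) i 0 -> forall j, (j <= n i)%N -> Inv (PL i j) i j.
Proof.
move=> Hi B; elim=> [|j IHj] Hj; first exact: B.
rewrite PL_S; apply: Inv_step => //; exact: IHj (ltnW Hj).
Qed.

Lemma Inv_all i : (i < l)%N -> forall j, (j <= n i)%N -> Inv (PL i j) i j.
Proof.
elim: i => [|i IH] Hi; apply: Inv_j => //; first exact: Inv0.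
rewrite PL_next; apply: Inv_next => //; apply: IH => //; exact: ltnW.
Qed.

Lemma sumn_iota i : sumn [seq n u | u <- iota 0 i] = (\sum_(u < i) n u)%N.
Proof.
elim: i => [|i IH]; first by rewrite big_ord0.
have -> : iota 0 i.+1 = iota 0 i ++ [:: i] by rewrite -addn1 iotaD.
by rewrite big_ord_recr -IH map_cat sumn_cat /= addn0.
Qed.

Lemma main_res : exists gamma : nat -> nat -> S,
    [/\ forall i j, (i < l)%N -> (j < n i)%N -> gamma i j \is a GRing.unit,
        gamma 0%N 0%N = beta 0%N 0%N
      & forall i j, (i < l)%N -> (j < n i)%N ->
          [/\ (size (Gpoly sigma a n gamma i j)).-1 = (\sum_(u < i) n u + j.+1)%N,
              forall u v, (u < l)%N -> (v < n u)%N ->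
                ((u < i)%N \/ (u = i /\ (v <= j)%N)) ->
                skew_rem sigma (Gpoly sigma a n gamma i j)
                  (sconj sigma (a u) (beta u v)) 0
            & forall u v, (u < l)%N -> (v < n u)%N ->
                ((i < u)%N \/ (u = i /\ (j < v)%N)) ->
                exists c : S, c \is a GRing.unit /\
                  skew_rem sigma (Gpoly sigma a n gamma i j)
                    (sconj sigma (a u) (beta u v)) c]].
Proof.
exists gam; split => //.
  move=> i j Hi Hj; have [_ _ HU2] := Inv_all Hi (ltnW Hj).
  rewrite /gam -(sum_delta (beta i) Hj); apply: (HU2 (fun v => (v == j)%:R)).
  by exists j; rewrite leqnn Hj eqxx unitr1.
move=> i j Hi Hj; have [HZ HU1 HU2] := Inv_all Hi Hj.
split.
- have [_ ->] := skew_prod_monic sigma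
    ([seq sconj sigma (a u) (gam u v) | u <- iota 0 i, v <- iota 0 (n u)]
     ++ [seq sconj sigma (a i) (gam i v) | v <- iota 0 j.+1]).
  rewrite size_cat size_allpairs_dep size_map size_iota.
  have -> : [seq size (iota 0 (n x)) | x <- iota 0 i] = [seq n x | x <- iota 0 i].
    by apply: eq_map => x; rewrite size_iota.
  by rewrite sumn_iota.
- move=> u v Hu Hv Hc; rewrite Gpoly_PL.
  have Hb := beta_unit Hu Hv.
  have E := rv_Lv sigma (a u) (PL i j.+1) Hb.
  have Hc' : ((u < i)%N \/ (u = i /\ (v < j.+1)%N)).
    by case: Hc => [H|[H1 H2]]; [left | right; split => //; rewrite ltnS].
  rewrite (HZ u v Hu Hv Hc') in E.
  have E2 : rv sigma (PL i j.+1) (sconj sigma (a u) (beta u v)) = 0.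
    by rewrite -[rv _ _ _]mulr1 -(mulrV Hb) mulrA E mul0r.
  rewrite -E2; exact: rem_prod.
- move=> u v Hu Hv Hc; rewrite Gpoly_PL.
  have Hb := beta_unit Hu Hv.
  exists (rv sigma (PL i j.+1) (sconj sigma (a u) (beta u v))); split; last exact: rem_prod.
  have : rv sigma (PL i j.+1) (sconj sigma (a u) (beta u v)) * beta u v \is a GRing.unit.
    rewrite rv_Lv //; case: Hc => [Hlt | [Eu Hlt]].
      by apply: HU1 => //; rewrite Hlt Hu.
    move: Hv; rewrite Eu => Hv.
    rewrite -(sum_delta (beta i) Hv); apply: (HU2 (fun w => (w == v)%:R)).
    by exists v; rewrite Hlt Hv eqxx unitr1.
  by rewrite unitrM => /andP [].
Qed.
End Main.

(* Indices are 0-based: i < l, j < n i correspond to the paper's i+1, j+1. *)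
Theorem theorem2 (R S : finComUnitRingType) (iota : {rmorphism R -> S})
  (k : finFieldType) (pi : {rmorphism R -> k}) (h : {poly R}) (theta : S)
  (sigma : {rmorphism S -> S})
  (l : nat) (a : nat -> S) (n : nat -> nat) (beta : nat -> nat -> S) :
  galois_setting iota pi h theta sigma ->
  (forall i, (i < l)%N -> a i \is a GRing.unit) ->
  (forall i j, (i < j < l)%N -> forall b : S, b \is a GRing.unit ->
     a i - sconj sigma (a j) b \is a GRing.unit) ->
  (forall i, (i < l)%N -> forall c : nat -> R,
     \sum_(j < n i) iota (c j) * beta i j = 0 ->
     forall j, (j < n i)%N -> c j = 0) ->
  exists gamma : nat -> nat -> S,
    [/\ forall i j, (i < l)%N -> (j < n i)%N -> gamma i j \is a GRing.unit,
        gamma 0%N 0%N = beta 0%N 0%N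
      & forall i j, (i < l)%N -> (j < n i)%N ->
          [/\ (size (Gpoly sigma a n gamma i j)).-1 = (\sum_(u < i) n u + j.+1)%N,
              forall u v, (u < l)%N -> (v < n u)%N ->
                ((u < i)%N \/ (u = i /\ (v <= j)%N)) ->
                skew_rem sigma (Gpoly sigma a n gamma i j)
                  (sconj sigma (a u) (beta u v)) 0
            & forall u v, (u < l)%N -> (v < n u)%N ->
                ((i < u)%N \/ (u = i /\ (j < v)%N)) ->
                exists c : S, c \is a GRing.unit /\
                  skew_rem sigma (Gpoly sigma a n gamma i j)
                    (sconj sigma (a u) (beta u v)) c]].
Proof.
move=> [[chainR _] [psurj pker] [hmon hirr] [hroot hbij] [_ sfixiff _ sfrob]] Ha Hsep Hind.
have [p0 [t0 [Hp0 Hgen Ht0 Ht0']]] := unif_data pker chainR.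
have Hsfix : forall r, sigma (iota r) = iota r.
  by move=> r; apply/(sfixiff (iota r)).2; exists r.
apply: (main_res Hsfix Ha Hsep Hind).
- move=> bs N c w; exact: (indep_unit psurj pker Hgen Ht0 Ht0' hirr hmon hroot hbij).
- move=> t; exact: (FF psurj pker Hgen Ht0 hirr hmon hroot hbij sfrob).
Qed.
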